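(* Let $q$ be a prime power and $n\ge k\ge 0$ integers. Let $V_1,\dots,V_\ell$ be subspaces of $\mathbb{F}_q^n$, each of dimension at most $k$. Suppose there exist integers $\delta_1,\dots,\delta_\ell\ge0$ such that $\dim\big(\bigcap_{i\in\Omega}V_i\big)\le k-\sum_{i\in\Omega}\delta_i$ for every nonempty $\Omega\subseteq[\ell]$. Then there exist subspaces $V_i'\supseteq V_i$ of $\mathbb{F}_q^n$ with $\dim V_i'=k-\delta_i$, $i=1,\dots,\ell$, such that $\dim\big(\bigcap_{i\in\Omega}V_i'\big)\le k-\sum_{i\in\Omega}\delta_i$ for every nonempty $\Omega\subseteq[\ell]$. *)

(* Defs.v *)
From mathcomp Require Import all_boot all_order all_algebra all_field.

(* Main.v *)
Require Import Defs.
From mathcomp Require Import all_boot all_order all_algebra all_field.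
From mathcomp Require Import zify.
Import GRing.Theory Num.Theory.
Local Open Scope ring_scope.

Lemma line_disj (F : fieldType) (vT : vectType F) (U : {vspace vT}) (v : vT) :
  v \notin U -> \dim (U + <[v]>) = (\dim U + 1)%N.
Proof.
move=> vU.
have v0 : v != 0 by apply: contraNneq vU => ->; rewrite mem0v.
rewrite dimv_disjoint_sum ?dim_vline ?v0 //.
apply/eqP; rewrite -subv0; apply/subvP => w /memv_capP [wU /vlineP [c wE]].
rewrite wE in wU *; rewrite memv0; have [->|c0] := eqVneq c 0; first by rewrite scale0r.
have := memvZ c^-1 wU; rewrite scalerK // => vU2; by rewrite vU2 in vU.
Qed.

Lemma cap_line_le (F : fieldType) (vT : vectType F) (U W : {vspace vT}) (v : vT) :
  (\dim ((U + <[v]>) :&: W) <= \dim (U :&: W) + 1)%N.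
Proof.
have h1 := dimv_sum_cap (U + <[v]>) W.
have h2 := dimv_sum_cap U W.
have h3 : (\dim (U + <[v]>) <= \dim U + 1)%N.
  apply: leq_trans (dimv_add_leqif U <[v]>) _.
  by rewrite leq_add2l dim_vline leq_b1.
have h4 : (\dim (U + W) <= \dim (U + <[v]> + W))%N.
  by apply: dimvS; apply: addvS => //; apply: addvSl.
lia.
Qed.

Lemma cap_line_sub (F : fieldType) (vT : vectType F) (U W : {vspace vT}) (v : vT) :
  v \notin (U + W)%VS -> ((U + <[v]>) :&: W <= U :&: W)%VS.
Proof.
move=> vUW; rewrite subv_cap capvSr andbT.
apply/subvP => w /memv_capP [/memv_addP [u uU [x /vlineP [c ->] ->]] wW].
have [->|c0] := eqVneq c 0; first by rewrite scale0r addr0.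
have : v \in (U + W)%VS.
  have -> : v = c^-1 *: (- u) + c^-1 *: (u + c *: v).
    rewrite -scalerDr addKr. by rewrite scalerK.
  by apply: memv_add; apply: memvZ => //; rewrite memvN.
by rewrite (negbTE vUW).
Qed.

Lemma sumUI (I : finType) (A B : {set I}) (f : I -> nat) :
  (\sum_(i in A :|: B) f i + \sum_(i in A :&: B) f i
   = \sum_(i in A) f i + \sum_(i in B) f i)%N.
Proof.
rewrite (@big_setID nat 0%N addn _ (A :|: B) A) setUK setDUl setDv set0U (@big_setID nat 0%N addn _ B A).
rewrite [B :&: A]setIC /=. lia.
Qed.

Definition good (F : finFieldType) (n k l : nat) (delta : 'I_l -> nat)
  (V : 'I_l -> {vspace 'rV[F]_n}) :=
  forall Om : {set 'I_l}, Om != set0 ->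
    (\dim (\bigcap_(i in Om) V i)%VS + \sum_(i in Om) delta i <= k)%N.

Arguments good {F n} k {l} delta V.

Lemma dimfull (F : finFieldType) n : \dim (fullv : {vspace 'rV[F]_n}) = n.
Proof. by rewrite dimvf /dim /= mul1n. Qed.

Lemma step (F : finFieldType) (n k l : nat) (hkn : (k <= n)%N) (delta : 'I_l -> nat)
  (V : 'I_l -> {vspace 'rV[F]_n}) (hg : good k delta V) (j : 'I_l)
  (hj : (\dim (V j) + delta j < k)%N) :
  exists V1 : 'I_l -> {vspace 'rV[F]_n},
    [/\ forall i, (V i <= V1 i)%VS, good k delta V1,
        forall i, i != j -> V1 i = V i & \dim (V1 j) = (\dim (V j) + 1)%N].
Proof.
pose T := fun Om : {set 'I_l} => (j \in Om) &&
  (\dim (\bigcap_(i in Om) V i)%VS + \sum_(i in Om) delta i == k)%N.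
have hlat : forall O1 O2, T O1 -> T O2 -> T (O1 :&: O2).
  move=> O1 O2 /andP[j1 /eqP t1] /andP[j2 /eqP t2].
  rewrite /T inE j1 j2 /=.
  have n12 : O1 :&: O2 != set0 by apply/set0Pn; exists j; rewrite inE j1 j2.
  have nU : O1 :|: O2 != set0 by apply/set0Pn; exists j; rewrite inE j1.
  have hI := hg _ n12; have hU := hg _ nU.
  have es : (\sum_(i in O1 :|: O2) delta i + \sum_(i in O1 :&: O2) delta i
     = \sum_(i in O1) delta i + \sum_(i in O2) delta i)%N by exact: sumUI.
  set A := (\bigcap_(i in O1) V i)%VS in t1 *.
  set B := (\bigcap_(i in O2) V i)%VS in t2 *.
  set C := (\bigcap_(i in (O1 :&: O2)%SET) V i)%VS in hI *.
  set D := (\bigcap_(i in (O1 :|: O2)%SET) V i)%VS in hU.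
  have sAB : (A + B <= C)%VS.
    rewrite subv_add; apply/andP; split; apply/subv_bigcapP => i;
      rewrite inE => /andP[i1 i2]; [exact: (bigcapv_inf i i1 (subvv _)) | exact: (bigcapv_inf i i2 (subvv _))].
  have sD : (A :&: B <= D)%VS.
    apply/subv_bigcapP => i; rewrite inE => /orP[i1|i2].
      exact: subv_trans (capvSl _ _) (bigcapv_inf i i1 (subvv _)).
    exact: subv_trans (capvSr _ _) (bigcapv_inf i i2 (subvv _)).
  have := dimv_sum_cap A B; have := dimvS sAB; have := dimvS sD.
  move=> h1 h2 h3; apply/eqP; clearbody A B C D.
  set sI := (\sum_(i in O1 :&: O2) delta i)%N in hI es *. set sU := (\sum_(i in O1 :|: O2) delta i)%N in hU es. clearbody sI sU. lia.
have [X [hXj hXd hXT]] : exists X : {vspace 'rV[F]_n},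
    [/\ (V j <= X)%VS, (\dim X < n)%N &
        forall Om, T Om -> (V j + \bigcap_(i in Om :\ j) V i <= X)%VS].
  case: (boolP [exists Om, T Om]) => [/existsP [O1 tO1] | none]; last first.
    exists (V j); split => //; first lia.
    by move=> Om tOm; case/negP: none; apply/existsP; exists Om.
  case: (arg_minnP (fun O : {set 'I_l} => #|O|) tO1) => O0 tO0 minO0.
  have sub0 : forall Om, T Om -> O0 \subset Om.
    move=> Om tOm; have tI := hlat _ _ tOm tO0.
    have sI : Om :&: O0 \subset O0 := subsetIr _ _.
    have := geq_leqif (subset_leqif_cards sI); rewrite minO0 // => /esym/eqP <-.
    exact: subsetIl.
  exists (V j + \bigcap_(i in O0 :\ j) V i)%VS; split.
  - exact: addvSl.
  - move: (tO0) => /andP[j0 /eqP t0].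
    rewrite (big_setD1 j j0) (big_setD1 j j0) /= in t0.
    pose W0 := (\bigcap_(i in O0 :\ j) V i)%VS.
    pose S0 := (\sum_(i in O0 :\ j) delta i)%N.
    change (\dim (V j + W0) < n)%N.
    have t0' : (\dim (V j :&: W0) + (delta j + S0) = k)%N by exact: t0.
    have hsc : (\dim (V j + W0) + \dim (V j :&: W0) = \dim (V j) + \dim W0)%N
      by exact: dimv_sum_cap.
    case: (boolP (O0 :\ j == set0)) => [/eqP e | ne].
      have eW : W0 = fullv by rewrite /W0 e big_set0.
      have eS : S0 = 0%N by rewrite /S0 e big_set0.
      rewrite eW eS capvf in t0'; lia.
    have hW : (\dim W0 + S0 <= k)%N by exact: hg _ ne.
    clearbody W0 S0; lia.
  - move=> Om tOm; apply: addvS => //; apply/subv_bigcapP => i iO0.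
    apply: bigcapv_inf (subvv _).
    exact: (subsetP (setSD [set j] (sub0 _ tOm)) i iO0).
have [v _ vX] : exists2 v, v \in (fullv : {vspace 'rV[F]_n}) & v \notin X.
  apply/subvPn; apply: contraTN hXd => /dimvS; rewrite dimfull -leqNgt //.
have vVj : v \notin V j by apply: contra vX; apply: (subvP hXj).
pose V1 := fun i => if i == j then (V j + <[v]>)%VS else V i.
exists V1; split.
- by move=> i; rewrite /V1; case: eqP => [->|_]; [apply: addvSl | apply: subvv].
- move=> Om Om0.
  pose S := (\sum_(i in Om) delta i)%N.
  change (\dim (\bigcap_(i in Om) V1 i) + S <= k)%N.
  have hOm : (\dim (\bigcap_(i in Om) V i) + S <= k)%N by exact: hg Om Om0.
  case jOm: (j \in Om); last first.
    have E : (\bigcap_(i in Om) V1 i)%VS = (\bigcap_(i in Om) V i)%VS.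
      apply: eq_bigr => i iOm; rewrite /V1; case: eqP => // eij.
      by rewrite -eij iOm in jOm.
    by rewrite E.
  pose W := (\bigcap_(i in Om :\ j) V i)%VS.
  have E1 : (\bigcap_(i in Om) V1 i)%VS = ((V j + <[v]>) :&: W)%VS.
    rewrite (big_setD1 j jOm) /V1 eqxx /=; congr (_ :&: _)%VS.
    by apply: eq_bigr => i; rewrite !inE => /andP[/negbTE -> _].
  have E0 : (\bigcap_(i in Om) V i)%VS = (V j :&: W)%VS by rewrite (big_setD1 j jOm).
  rewrite E1; rewrite E0 in hOm.
  case tOm: (T Om).
    have vW : v \notin (V j + W)%VS by apply: contra vX; apply: (subvP (hXT _ tOm)).
    have := dimvS (cap_line_sub _ _ _ _ _ vW); clearbody W S; lia.
  have ntOm : (\dim (V j :&: W) + S != k)%N.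
    by move: tOm; rewrite /T jOm /= E0 => /negbT.
  have := @cap_line_le _ _ (V j) W v; clearbody W S; lia.
- by move=> i /negbTE ne; rewrite /V1 ne.
- by rewrite /V1 eqxx line_disj.
Qed.

Lemma good1 (F : finFieldType) (n k l : nat) (delta : 'I_l -> nat)
  (V : 'I_l -> {vspace 'rV[F]_n}) (hg : good k delta V) j :
  (\dim (V j) + delta j <= k)%N.
Proof.
have h1 : [set j] != set0 by apply/set0Pn; exists j; rewrite inE.
by have := hg _ h1; rewrite !big_set1.
Qed.

Lemma core (F : finFieldType) (n k l : nat) (hkn : (k <= n)%N) (delta : 'I_l -> nat) :
  forall N (V : 'I_l -> {vspace 'rV[F]_n}),
  (\sum_i (k - delta i - \dim (V i)) <= N)%N -> good k delta V ->
  exists V' : 'I_l -> {vspace 'rV[F]_n},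
    [/\ forall i, (V i <= V' i)%VS, forall i, (\dim (V' i) + delta i = k)%N
      & good k delta V'].
Proof.
elim=> [|N IH] V hs hg;
  (case: (boolP [forall i, \dim (V i) + delta i == k]) =>
    [/forallP hall | /forallPn [j /negP hj]];
    [by exists V; split => // i; apply/eqP | ]);
  (have hj' : (\dim (V j) + delta j < k)%N by
    rewrite ltn_neqAle (good1 _ _ _ _ _ _ hg j) andbT; apply/negP).
  move: hs; rewrite (bigD1 j) //=; lia.
have [V1 [s1 g1 e1 d1]] := step _ _ _ _ hkn _ _ hg _ hj'.
have hs1 : (\sum_i (k - delta i - \dim (V1 i)) <= N)%N.
  have E : (\sum_(i | i != j) (k - delta i - \dim (V1 i))
          = \sum_(i | i != j) (k - delta i - \dim (V i)))%N.
    by apply: eq_bigr => i /e1 ->.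
  move: hs; rewrite (bigD1 j) //= [in X in (X <= N)%N](bigD1 j) //= E d1.
  move=> hs2; rewrite -ltnS; apply: leq_trans hs2; rewrite -addSn leq_add2r; lia.
have [V' [s' d' g']] := IH V1 hs1 g1.
by exists V'; split => // i; apply: subv_trans (s1 i) (s' i).
Qed.

Theorem mainTheorem12 (F : finFieldType) (n k l : nat) (hkn : (k <= n)%N)
  (V : 'I_l -> {vspace 'rV[F]_n})
  (hV : forall i, (\dim (V i) <= k)%N)
  (delta : 'I_l -> nat)
  (hdelta : forall Om : {set 'I_l}, Om != set0 ->
     ((\dim (\bigcap_(i in Om) V i)%VS)%:Z <= k%:Z - (\sum_(i in Om) delta i)%:Z)) :
  exists V' : 'I_l -> {vspace 'rV[F]_n},
    [/\ forall i, (V i <= V' i)%VS,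
        forall i, (\dim (V' i))%:Z = k%:Z - (delta i)%:Z
      & forall Om : {set 'I_l}, Om != set0 ->
     ((\dim (\bigcap_(i in Om) V' i)%VS)%:Z <= k%:Z - (\sum_(i in Om) delta i)%:Z)].
Proof.
have hg : good k delta V.
  move=> Om Om0; have := hdelta Om Om0.
  have -> : (\sum_(i in Om) delta i)%R = (\sum_(i in Om) delta i)%N by [].
  lia.
have [V' [s' d' g']] := core _ _ _ _ hkn _ _ _ (leqnn _) hg.
exists V'; split => //.
  by move=> i; have := d' i; lia.
move=> Om Om0; have := g' Om Om0.
have -> : (\sum_(i in Om) delta i)%R = (\sum_(i in Om) delta i)%N by [].
lia.
Qed.
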